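(* Let $p$ be a prime and $n\ge1$ an integer. Let $\widetilde G$ be the group generated by $\sigma_1,\dots,\sigma_{n+3}$ with $Z(\widetilde G)=[\widetilde G,\widetilde G]$ and relations $\sigma_i^{p}=1$ for $1\le i\le n+3$ and $[\sigma_i,\sigma_j]^{p}=1$ for $1\le i<j\le n+3$ (the Schur covering group of the elementary abelian group of order $p^{n+3}$). Let $H$ be the subgroup of $\widetilde G$ generated by $[\sigma_1,\sigma_2][\sigma_3,\sigma_4]$ and $[\sigma_1,\sigma_s][\sigma_{s+1},\sigma_{s+2}]$ for $3\le s\le n+1$ (so $H=\langle [\sigma_1,\sigma_2][\sigma_3,\sigma_4],[\sigma_1,\sigma_3][\sigma_4,\sigma_5],\dots,[\sigma_1,\sigma_{n+1}][\sigma_{n+2},\sigma_{n+3}]\rangle$, a central subgroup of order $p^n$). Let $G=\widetilde G/H$. Then $B_0(G)$ contains a subgroup isomorphic to $(\mathbf{Z}/p\mathbf{Z})^n$.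
   Context: Commutators are $[g,h]=ghg^{-1}h^{-1}$; $Z(\cdot)$ denotes the center. $\mathbf{Q}/\mathbf{Z}$ has trivial group action. A group is bicyclic if it is cyclic or a direct product of two cyclic groups. The Bogomolov multiplier of a finite group $G$ is $B_0(G)=\bigcap_A \operatorname{Ker}\{\operatorname{res}_G^A: H^2(G,\mathbf{Q}/\mathbf{Z})\to H^2(A,\mathbf{Q}/\mathbf{Z})\}$, $A$ running over all bicyclic subgroups of $G$. *)

(* Defs.v *)
From HB Require Import structures.
From mathcomp Require Import all_boot all_order all_algebra all_fingroup all_solvable.
Set Implicit Arguments. Unset Strict Implicit. Unset Printing Implicit Defensive.
Import GRing.Theory Num.Theory.

Section GroupDefs.
Local Open Scope group_scope.

Definition pcomm (gT : finGroupType) (g h : gT) : gT := g * h * g^-1 * h^-1.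

Definition bicyclic (gT : finGroupType) (A : {set gT}) : Prop :=
  cyclic A \/ exists B C : {group gT}, [/\ cyclic B, cyclic C & B \x C = A].

Definition gens_set (gT : finGroupType) (m : nat) (sigma : nat -> gT) : {set gT} :=
  [set sigma i.+1 | i : 'I_m].

(* The generators [s1,s2][s3,s4] and [s1,s_s][s_{s+1},s_{s+2}], 3 <= s <= n+1
   (written s = t+3 with t < n-1). *)
Definition H_gens (gT : finGroupType) (n : nat) (sigma : nat -> gT) : {set gT} :=
  (pcomm (sigma 1%N) (sigma 2%N) * pcomm (sigma 3%N) (sigma 4%N)) |:
  [set pcomm (sigma 1%N) (sigma (val t + 3)%N) * pcomm (sigma (val t + 4)%N) (sigma (val t + 5)%N)
     | t : 'I_(n.-1)].

Definition Hsub (gT : finGroupType) (n : nat) (sigma : nat -> gT) : {group gT} :=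
  <<H_gens n sigma>>%G.

End GroupDefs.

Section Cohomology.
Local Open Scope ring_scope.
(* Q/Z with trivial action: values are rationals, compared modulo Z. *)
Definition qz_zero (q : rat) : bool := q \is a Num.int.

Definition cocycle2 (aT : finGroupType) (G : {set aT}) (f : aT -> aT -> rat) : Prop :=
  forall x y z, x \in G -> y \in G -> z \in G ->
    qz_zero (f y z - f (x * y)%g z + f x (y * z)%g - f x y).

Definition coboundary2 (aT : finGroupType) (A : {set aT}) (f : aT -> aT -> rat) : Prop :=
  exists g : aT -> rat, forall x y, x \in A -> y \in A ->
    qz_zero (f x y - (g x + g y - g (x * y)%g)).

Definition in_B0 (aT : finGroupType) (G : {group aT}) (f : aT -> aT -> rat) : Prop :=
  cocycle2 G f /\
  forall A : {group aT}, A \subset G -> bicyclic A -> coboundary2 A f.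

(* B_0(G) contains a subgroup isomorphic to (Z/pZ)^n: there are n classes in B_0(G)
   killed by p and F_p-linearly independent in H^2(G,Q/Z). *)
Definition B0_contains_Zp_pow (aT : finGroupType) (G : {group aT}) (p n : nat) : Prop :=
  exists f : 'I_n -> aT -> aT -> rat,
    [/\ forall i, in_B0 G (f i),
        forall i, coboundary2 G (fun x y => p%:R * f i x y)
      & forall c : 'I_n -> nat,
          coboundary2 G (fun x y => \sum_(i < n) (c i)%:R * f i x y) ->
          forall i, (p %| c i)%N].
End Cohomology.

(* Main.v *)
Require Import Defs.
From HB Require Import structures.
From mathcomp Require Import all_boot all_order all_algebra all_fingroup all_solvable.
From mathcomp Require Import ring zify.
Set Implicit Arguments. Unset Strict Implicit. Unset Printing Implicit Defensive.
Import GRing.Theory Num.Theory archimedean.Num.Theory.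

Section Heis.
Variables (p m : nat).
Local Open Scope ring_scope.
Definition heis : Type := ('rV['F_p]_m * 'M['F_p]_m)%type.
HB.instance Definition _ := Finite.on heis.
Definition Um (v w : 'rV['F_p]_m) : 'M['F_p]_m :=
  \matrix_(k, l) (if (k < l)%N then v 0 k * w 0 l else 0).
Lemma UmDl u v w : Um (u + v) w = Um u w + Um v w.
Proof. by apply/matrixP=> k l; rewrite !mxE; case: ifP => _; rewrite ?addr0 // mulrDl. Qed.
Lemma UmDr u v w : Um u (v + w) = Um u v + Um u w.
Proof. by apply/matrixP=> k l; rewrite !mxE; case: ifP => _; rewrite ?addr0 // mulrDr. Qed.
Lemma Um0l w : Um 0 w = 0.
Proof. by apply/matrixP=> k l; rewrite !mxE; case: ifP => _; rewrite ?mul0r. Qed.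
Lemma Um0r w : Um w 0 = 0.
Proof. by apply/matrixP=> k l; rewrite !mxE; case: ifP => _; rewrite ?mulr0. Qed.
Lemma UmNl v w : Um (- v) w = - Um v w.
Proof. by apply/matrixP=> k l; rewrite !mxE; case: ifP => _; rewrite ?oppr0 ?mulNr. Qed.
Lemma UmNr v w : Um v (- w) = - Um v w.
Proof. by apply/matrixP=> k l; rewrite !mxE; case: ifP => _; rewrite ?oppr0 ?mulrN. Qed.

Definition hmul (x y : heis) : heis := (x.1 + y.1, x.2 + y.2 + Um x.1 y.1).
Definition hone : heis := (0, 0).
Definition hinv (x : heis) : heis := (- x.1, - x.2 + Um x.1 x.1).
Lemma hmulA : associative hmul.
Proof.
case=> [u A] [v B] [w C]; rewrite /hmul /=; congr (_, _); first by rewrite addrA.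
by apply/matrixP=> k l; rewrite !mxE; case: ifP => _; ring.
Qed.
Lemma hmul1 : left_id hone hmul.
Proof. by case=> v A; rewrite /hmul /= Um0l !add0r addr0. Qed.
Lemma hmulV : left_inverse hone hinv hmul.
Proof.
case=> v A; rewrite /hmul /hone /=; congr (_, _); first by rewrite addNr.
by apply/matrixP=> k l; rewrite !mxE; case: ifP => _; ring.
Qed.
HB.instance Definition _ := Finite_isGroup.Build heis hmulA hmul1 hmulV.
End Heis.

Section HeisLemmas.
Variables (p m : nat).
Local Notation hT := (heis p m).
Local Open Scope group_scope.
Lemma hmulE (x y : hT) : x * y = ((x.1 + y.1)%R, (x.2 + y.2 + Um x.1 y.1)%R).
Proof. by []. Qed.
Lemma hinvE (x : hT) : x^-1 = ((- x.1)%R, (- x.2 + Um x.1 x.1)%R).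
Proof. by []. Qed.
Lemma honeE : (1 : hT) = (0%R, 0%R).
Proof. by []. Qed.
Lemma hmul1E (x y : hT) : (x * y).1 = (x.1 + y.1)%R.
Proof. by []. Qed.
Lemma hinv1E (x : hT) : (x^-1).1 = (- x.1)%R.
Proof. by []. Qed.
Lemma hcentral (x y : hT) : x.1 = 0%R -> x * y = y * x.
Proof.
case: x y => [v A] [w B] /= ->; rewrite !hmulE /= Um0l Um0r.
by congr (_, _); rewrite ?addr0 ?add0r // addrC.
Qed.
Lemma hpcomm (x y : hT) :
  x * y * x^-1 * y^-1 = (0%R, (Um x.1 y.1 - Um y.1 x.1)%R).
Proof.
case: x y => [v A] [w B]; rewrite !hmulE !hinvE /=; congr (_, _).
  by rewrite (addrAC v) addrN add0r addrN.
by apply/matrixP=> k l; rewrite !mxE; case: ifP => _; ring.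
Qed.
Lemma hexp0 (D : 'M['F_p]_m) k : ((0%R, D) : hT) ^+ k = (0%R, (D *+ k)%R).
Proof.
elim: k => [|k IH]; first by rewrite expg0 honeE mulr0n.
by rewrite expgS IH hmulE /= Um0l ?addr0 ?add0r mulrS.
Qed.
Lemma hexpv (v : 'rV['F_p]_m) k : Um v v = 0%R ->
  ((v, 0%R) : hT) ^+ k = ((v *+ k)%R, 0%R).
Proof.
move=> Uvv; elim: k => [|k IH]; first by rewrite expg0 honeE mulr0n.
rewrite expgS IH hmulE /= addr0 -mulrS; congr (_, _).
apply/matrixP=> i j; move/matrixP: Uvv => /(_ i j); rewrite !mxE.
case: ifP => _ e; rewrite ?addr0 // add0r -scaler_nat !mxE mulrCA e ?mulr0. all: by [].
Qed.
End HeisLemmas.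
Section Lift.
Variable p : nat.
Hypothesis pr_p : prime p.
Local Open Scope ring_scope.
Definition lift (a : 'F_p) : rat := (nat_of_ord a)%:R / p%:R.

Lemma p_neq0 : (p%:R : rat) != 0.
Proof. by rewrite pnatr_eq0 -lt0n prime_gt0. Qed.

Lemma qzD x y : qz_zero x -> qz_zero y -> qz_zero (x + y).
Proof. rewrite /qz_zero; exact: rpredD. Qed.
Lemma qzN x : qz_zero x -> qz_zero (- x).
Proof. by rewrite /qz_zero rpredN. Qed.
Lemma qzB x y : qz_zero x -> qz_zero y -> qz_zero (x - y).
Proof. rewrite /qz_zero; exact: rpredB. Qed.
Lemma qzMn x k : qz_zero x -> qz_zero (k%:R * x).
Proof. by rewrite /qz_zero => h; apply: rpredM => //; apply: natr_int. Qed.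
Lemma qz0 : qz_zero 0.
Proof. rewrite /qz_zero; exact: rpred0. Qed.
Lemma qznat k : qz_zero k%:R.
Proof. rewrite /qz_zero; exact: natr_int. Qed.

Lemma valFp_lt (a : 'F_p) : (nat_of_ord a < p)%N.
Proof. by rewrite -[p in (_ < p)%N](card_Fp pr_p) card_ord ltn_ord. Qed.

Lemma valFpK (a : 'F_p) : (nat_of_ord a)%:R = a.
Proof. by apply: ord_inj; rewrite val_Fp_nat // modn_small // valFp_lt. Qed.

Lemma lift_nat k : qz_zero (lift (k%:R) - k%:R / p%:R).
Proof.
rewrite /lift val_Fp_nat // {2}(divn_eq k p) natrD natrM mulrDl mulfK ?p_neq0 //.
by rewrite opprD addrCA addrN addr0; apply/qzN/qznat.
Qed.

Lemma lift_add a b : qz_zero (lift (a + b) - lift a - lift b).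
Proof.
have := lift_nat (nat_of_ord a + nat_of_ord b); rewrite natrD !valFpK.
by rewrite /lift natrD mulrDl opprD addrA.
Qed.

Lemma lift0 : lift 0 = 0.
Proof. by rewrite /lift /= mul0r. Qed.

Lemma lift_opp a : qz_zero (lift (- a) + lift a).
Proof.
have := lift_add (- a) a; rewrite addNr lift0 add0r => /qzN.
by rewrite !opprD !opprK addrC.
Qed.

Lemma lift_mul3 a b c :
  qz_zero (lift (a * b * c) - ((nat_of_ord a * nat_of_ord b * nat_of_ord c)%N)%:R / p%:R).
Proof. by have := lift_nat (nat_of_ord a * nat_of_ord b * nat_of_ord c); rewrite !natrM !valFpK. Qed.

Lemma lift_mul2 a b :
  qz_zero (lift (a * b) - ((nat_of_ord a * nat_of_ord b)%N)%:R / p%:R).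
Proof. by have := lift_nat (nat_of_ord a * nat_of_ord b); rewrite !natrM !valFpK. Qed.

Lemma qz_div_dvd k : qz_zero (k%:R / p%:R) -> (p %| k)%N.
Proof.
case/archimedean.Num.Theory.intrP=> z hz.
have : (k%:R : rat) = (z * p)%:~R by rewrite intrM -hz mulfVK ?p_neq0.
move=> hk0; have hk : (k%:Z) = z * p by apply: (@intr_inj rat); exact: hk0.
by rewrite -(@dvdzE p k) /= hk dvdz_mull.
Qed.

Lemma lift_eq0 a : qz_zero (lift a) -> a = 0.
Proof.
move/qz_div_dvd => hd; case: (posnP (nat_of_ord a)) => [h | h].
  by rewrite -(valFpK a) h.
by have := dvdn_leq h hd; rewrite leqNgt valFp_lt.
Qed.

Lemma lift1 : lift 1 = 1 / p%:R.
Proof. by rewrite /lift -[X in nat_of_ord X]mulr1n val_Fp_nat // modn_small ?prime_gt1. Qed.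

Lemma lift_comb a b c d : a - b + c - d = 0 ->
  qz_zero (lift a - lift b + lift c - lift d).
Proof.
move=> e; have -> : a = b - c + d by apply/eqP; rewrite -subr_eq0 -e; apply/eqP; ring.
have h1 := lift_add (b - c) d; have h2 := lift_add b (- c); have h3 := lift_opp c.
have -> : lift (b - c + d) - lift b + lift c - lift d =
  (lift (b - c + d) - lift (b - c) - lift d) + (lift (b + - c) - lift b - lift (- c))
   + (lift (- c) + lift c) by ring.
by apply: qzD; [apply: qzD|].
Qed.

Definition Qn (x : nat) : rat := ((x ^ 2 + p * x)%N)%:R / ((2 * p)%N)%:R.

Lemma Qn_add (a b : 'F_p) :
  qz_zero (Qn (nat_of_ord (a + b)) - Qn (nat_of_ord a) - Qn (nat_of_ord b) - ((nat_of_ord a * nat_of_ord b)%N)%:R / p%:R).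
Proof.
set l := nat_of_ord a; set u := nat_of_ord b; set nu := nat_of_ord (a + b).
have hnu : nu = ((l + u) %% p)%N by rewrite /nu -val_Fp_nat // natrD !valFpK.
have hlt : (l + u < 2 * p)%N.
  by rewrite mul2n -addnn; have := valFp_lt a; have := valFp_lt b; lia.
have p0 := p_neq0.
have ee : ((l + u) %/ p < 2)%N by rewrite ltn_divLR ?prime_gt0 // mulnC.
have hd := divn_eq (l + u) p; rewrite -hnu in hd.
move: ee hd; case: ((l + u) %/ p)%N => [|[|//]] _; rewrite ?mul0n ?mul1n ?add0n => hd.
  rewrite /Qn -hd; have -> : (((l + u) ^ 2 + p * (l + u))%N%:R / (2 * p)%N%:R -
   (l ^ 2 + p * l)%N%:R / (2 * p)%N%:R - (u ^ 2 + p * u)%N%:R / (2 * p)%N%:R -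
   (l * u)%N%:R / p%:R : rat) = 0.
    by rewrite !(natrD, natrM, natrX); field.
  exact: qz0.
rewrite /Qn; have hr : (l%:R + u%:R : rat) = p%:R + nu%:R by rewrite -!natrD hd addnC.
have -> : ((nu ^ 2 + p * nu)%N%:R / (2 * p)%N%:R -
   (l ^ 2 + p * l)%N%:R / (2 * p)%N%:R - (u ^ 2 + p * u)%N%:R / (2 * p)%N%:R -
   (l * u)%N%:R / p%:R : rat) = - (l%:R + u%:R).
  rewrite !(natrD, natrM, natrX); have -> : (nu%:R : rat) = l%:R + u%:R - p%:R.
    by rewrite hr; ring.
  by field.
by apply: qzN; rewrite -natrD; apply: qznat.
Qed.
End Lift.
Section Span.
Variables (p n : nat).
Local Notation m := n.+3.
Lemma mxaddE (A B : 'M['F_p]_m) i j : (A + B)%R i j = (A i j + B i j)%R.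
Proof. by rewrite mxE. Qed.
Lemma mxoppE (A : 'M['F_p]_m) i j : (- A)%R i j = (- A i j)%R.
Proof. by rewrite mxE. Qed.
Definition ev (j : nat) : 'rV['F_p]_m := \row_(k < m) ((k : nat) == j)%:R%R.

Lemma Um_ev a b (k l : 'I_m) :
  Um (ev a) (ev b) k l = ((k < l)%N && (k == a :> nat) && (l == b :> nat))%:R%R.
Proof.
rewrite !mxE; case: (k < l)%N; case: (k == a :> nat); case: (l == b :> nat);
  by rewrite /= ?mul1r ?mul0r.
Qed.

Lemma Um_ev0 a : Um (ev a) (ev a) = 0%R.
Proof.
apply/matrixP=> k l; rewrite Um_ev mxE.
case: ltngtP => //= kl.
have -> : (k == a :> nat) && (l == a :> nat) = false.
  by apply/negP=> /andP[/eqP e1 /eqP e2]; move: kl; rewrite e1 e2 ltnn.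
by [].
Qed.

Definition spanb (N : 'M['F_p]_m) : bool :=
  [forall j : 'I_n, N (inord (j + 2)) (inord (j + 3)) == N (inord 0) (inord (j + 1))] &&
  [forall k : 'I_m, forall l : 'I_m,
     [&& (k < l)%N, ~~ ((k == 0 :> nat) && (1 <= l <= n)%N) &
         ~~ ((l == k + 1 :> nat) && (2 <= k <= n + 1)%N)] ==> (N k l == 0%R)].

Lemma spanb0 : spanb 0%R.
Proof.
apply/andP; split; apply/forallP => j; rewrite ?mxE //.
by apply/forallP => l; rewrite mxE eqxx implybT.
Qed.

Lemma spanbD N N' : spanb N -> spanb N' -> spanb (N + N')%R.
Proof.
case/andP=> /forallP h1 /forallP h2 /andP[/forallP h1' /forallP h2'].
apply/andP; split; apply/forallP => j; first by rewrite !mxE (eqP (h1 j)) (eqP (h1' j)).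
apply/forallP => l; apply/implyP => c; rewrite mxE.
by have /forallP/(_ l)/implyP/(_ c)/eqP -> := h2 j; have /forallP/(_ l)/implyP/(_ c)/eqP -> := h2' j; rewrite addr0.
Qed.

Definition Nj (j : nat) : 'M['F_p]_m :=
  (Um (ev 0) (ev (j + 1)) - Um (ev (j + 1)) (ev 0) +
  (Um (ev (j + 2)) (ev (j + 3)) - Um (ev (j + 3)) (ev (j + 2))))%R.

Lemma Nj_entry j (k l : 'I_m) : (k < l)%N ->
  Nj j k l = (((k == 0 :> nat) && (l == j + 1 :> nat))%:R +
             ((k == j + 2 :> nat) && (l == j + 3 :> nat))%:R)%R.
Proof.
move=> kl; rewrite /Nj !mxaddE !mxoppE !Um_ev kl /=.
have -> : (k == j + 1 :> nat) && (l == 0 :> nat) = false.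
  by apply/negP => /andP[/eqP a /eqP b]; rewrite b in kl.
have -> : (k == j + 3 :> nat) && (l == j + 2 :> nat) = false.
  by apply/negP => /andP[/eqP a /eqP b]; move: kl; rewrite a b; lia.
by rewrite mulr0n !subr0.
Qed.

Lemma inordK' (k : nat) : (k < m)%N -> ((inord k : 'I_m) : nat) = k.
Proof. exact: inordK. Qed.

Lemma spanb_Nj j : (j < n)%N -> spanb (Nj j).
Proof.
move=> jn; apply/andP; split; apply/forallP => j'.
  have hj' := ltn_ord j'.
  rewrite !Nj_entry ?inordK' //; try (rewrite ?inordK'; lia).
  by rewrite !eqn_add2r !addn2 /= andbb add0r (eq_sym 0%N) addn_eq0 andbF addr0.
apply/forallP => l; apply/implyP => /and3P[kl c1 c2].
rewrite Nj_entry //.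
have -> : ((j' == 0 :> nat) && (l == j + 1 :> nat)) = false.
  by apply/negP => /andP[/eqP a /eqP b]; move: c1; rewrite a b /=; lia.
have -> : ((j' == j + 2 :> nat) && (l == j + 3 :> nat)) = false.
  by apply/negP => /andP[/eqP a /eqP b]; move: c2; rewrite a b; lia.
by rewrite addr0.
Qed.
End Span.
Section Rank.
Variables (p n : nat).
Local Notation m := n.+3.
Lemma Eentry (v w : 'rV['F_p]_m) (k l : 'I_m) : (k < l)%N ->
  (Um v w - Um w v)%R k l = (v 0 k * w 0 l - w 0 k * v 0 l)%R.
Proof. by move=> kl; rewrite mxaddE mxoppE !mxE kl. Qed.

Lemma rank_lemma (v w : 'rV['F_p]_m) : spanb (Um v w - Um w v)%R ->
  forall j, (j < n)%N -> (Um v w - Um w v)%R (inord 0) (inord (j + 1)) = 0%R.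
Proof.
set N := (Um v w - Um w v)%R.
case/andP=> /forallP h1 /forallP h2.
have c2 : forall k l : 'I_m, (k < l)%N -> ~~ ((k == 0 :> nat) && (1 <= l <= n)%N) ->
   ~~ ((l == k + 1 :> nat) && (2 <= k <= n + 1)%N) -> N k l = 0%R.
  by move=> k l a b c; apply/eqP; have /forallP/(_ l)/implyP := h2 k; apply; apply/and3P.
have plu : forall a b c d : 'I_m, (a < b)%N -> (b < c)%N -> (c < d)%N ->
   (N a b * N c d - N a c * N b d + N a d * N b c = 0)%R.
  move=> a b c d ab bc cd; rewrite /N !Eentry //; try lia.
  by ring.
elim=> [|j IH] jn.
  have := plu (inord 0) (inord 1) (inord 2) (inord 3).
  rewrite !inordK //; try lia.
  move=> /(_ isT isT isT).
  rewrite (c2 (inord 1) (inord 3)) ?inordK //; try lia.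
  rewrite (c2 (inord 1) (inord 2)) ?inordK //; try lia.
  have := h1 (Ordinal jn); rewrite /= add0n => /eqP ->.
  rewrite !mulr0 subr0 addr0 -expr2 => /eqP; rewrite expf_eq0 /= => /eqP.
  by rewrite add0n.
have jn' : (j < n)%N by lia.
have := plu (inord 0) (inord (j.+1 + 1)) (inord (j.+1 + 2)) (inord (j.+1 + 3)).
rewrite !inordK //; try lia.
move=> H; move: (H ltac:(lia) ltac:(lia) ltac:(lia)) => {H}.
rewrite (c2 (inord (j.+1 + 1)) (inord (j.+1 + 3))) ?inordK //; try lia.
have e1 : N (inord (j.+1 + 1)) (inord (j.+1 + 2)) = N (inord (j + 2)) (inord (j + 3)).
  by congr (N (inord _) (inord _)); lia.
have e2 := h1 (Ordinal jn'); have e3 := h1 (Ordinal jn); move/eqP: e2 => e2; move/eqP: e3 => e3.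
rewrite /= in e2 e3; rewrite e1 e2 IH // e3.
by rewrite !mulr0 subr0 addr0 -expr2 => /eqP; rewrite expf_eq0 /= => /eqP.
Qed.
End Rank.
Section Main.
Local Open Scope group_scope.
Variables (p n : nat) (gT : finGroupType) (Gt : {group gT}) (sigma : nat -> gT).
Hypotheses (pr_p : prime p) (n_gt0 : (0 < n)%N).
Hypothesis Gt_gen : Gt :=: <<gens_set (n + 3) sigma>>.
Hypothesis ZGt : 'Z(Gt) = [~: Gt, Gt].
Local Notation m := n.+3.
Local Notation hT := (heis p m).
Variable F : {morphism Gt >-> hT}.
Hypothesis HF : forall j, (j < n + 3)%N -> F (sigma j.+1) = (ev p n j, 0%R).
Local Notation H := (Hsub n sigma).

Lemma sigma_in j : (j < n + 3)%N -> sigma j.+1 \in Gt.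
Proof.
move=> jn; rewrite Gt_gen; apply: mem_gen.
by apply/imsetP; exists (Ordinal jn).
Qed.

Lemma pcomm_commg (x y : gT) : pcomm x y = [~ x^-1, y^-1].
Proof. by rewrite /pcomm /commg /conjg !invgK !mulgA. Qed.

Lemma pcomm_Z x y : x \in Gt -> y \in Gt -> pcomm x y \in 'Z(Gt).
Proof. by move=> Gx Gy; rewrite ZGt pcomm_commg mem_commg ?groupV. Qed.

Lemma pcomm_in x y : x \in Gt -> y \in Gt -> pcomm x y \in Gt.
Proof. by move=> Gx Gy; rewrite /pcomm !groupM ?groupV. Qed.

Lemma F_pcomm x y : x \in Gt -> y \in Gt ->
  F (pcomm x y) = (0%R, (Um (F x).1 (F y).1 - Um (F y).1 (F x).1)%R).
Proof.
move=> Gx Gy; rewrite /pcomm !morphM ?groupM ?groupV // !morphV //.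
exact: hpcomm.
Qed.

Definition gen (j : nat) : gT :=
  if j is t.+1 then pcomm (sigma 1) (sigma (t + 3)) * pcomm (sigma (t + 4)) (sigma (t + 5))
  else pcomm (sigma 1) (sigma 2) * pcomm (sigma 3) (sigma 4).

Lemma hmul00 (X Y : 'M['F_p]_m) : ((0%R, X) : hT) * (0%R, Y) = (0%R, (X + Y)%R).
Proof. by rewrite hmulE /= Um0l !addr0. Qed.

Lemma gen_pcomm j : (j < n)%N -> exists a b c d,
  [/\ a \in Gt, b \in Gt, c \in Gt, d \in Gt & gen j = pcomm a b * pcomm c d] /\
  F (gen j) = (0%R, Nj p n j).
Proof.
move=> jn; case: j jn => [|t] jn.
  exists (sigma 0.+1), (sigma 1.+1), (sigma 2.+1), (sigma 3.+1).
  have h k : (k < 4)%N -> sigma k.+1 \in Gt by move=> k4; apply: sigma_in; lia.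
  split; first by split; rewrite ?h.
  rewrite /gen morphM ?pcomm_in ?h // !F_pcomm ?h // !HF ?hmul00 //; try lia.
have e3 : sigma (t + 3) = sigma (t + 2).+1 by rewrite addnS.
have e4 : sigma (t + 4) = sigma (t + 3).+1 by rewrite addnS.
have e5 : sigma (t + 5) = sigma (t + 4).+1 by rewrite addnS.
have h k : (k < t + 5)%N -> sigma k.+1 \in Gt by move=> k4; apply: sigma_in; lia.
exists (sigma 0.+1), (sigma (t + 2).+1), (sigma (t + 3).+1), (sigma (t + 4).+1).
split; first by split; rewrite ?h //; try lia; rewrite /gen e3 e4 e5.
rewrite /gen e3 e4 e5 morphM ?pcomm_in ?h // ?F_pcomm ?h //; try lia.
rewrite !HF ?hmul00 //; try lia.
rewrite /Nj /=.
have -> : (t.+1 + 1 = t + 2)%N by lia.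
have -> : (t.+1 + 2 = t + 3)%N by lia.
by have -> : (t.+1 + 3 = t + 4)%N by lia.
Qed.

Lemma F_gen j : (j < n)%N -> F (gen j) = (0%R, Nj p n j).
Proof. by move=> jn; have [? [? [? [? [_ e]]]]] := gen_pcomm jn. Qed.

Lemma Hgens_gen h : h \in H_gens n sigma -> exists2 j, (j < n)%N & h = gen j.
Proof.
case/setU1P => [->|/imsetP[t _ ->]]; first by exists 0%N.
by exists (val t).+1; first by rewrite -ltn_predRL ltn_ord.
Qed.

Lemma gen_Hgens j : (j < n)%N -> gen j \in H_gens n sigma.
Proof.
case: j => [|t] jn; first by rewrite setU11.
apply/setU1P; right; apply/imsetP.
have tn : (t < n.-1)%N by rewrite ltn_predRL.
by exists (Ordinal tn).
Qed.

Lemma gen_H j : (j < n)%N -> gen j \in H.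
Proof. by move=> jn; apply: mem_gen; apply: gen_Hgens. Qed.

Lemma HinZ : H \subset 'Z(Gt).
Proof.
rewrite gen_subG; apply/subsetP => h /Hgens_gen[j jn ->].
have [a [b [c [d [[Ga Gb Gc Gd ->] _]]]]] := gen_pcomm jn.
by rewrite groupM ?pcomm_Z.
Qed.

Lemma HsubG : H \subset Gt.
Proof. exact: subset_trans HinZ (center_sub _). Qed.

Lemma nHG : Gt \subset 'N(H).
Proof. exact: normal_norm (sub_center_normal HinZ). Qed.

Definition Kset : {set hT} := [set x | (x.1 == 0%R) && spanb x.2].

Lemma Kset_group : group_set Kset.
Proof.
apply/group_setP; split; first by rewrite inE honeE /= eqxx spanb0.
move=> [v A] [w B]; rewrite !inE /= => /andP[/eqP -> sA] /andP[/eqP -> sB].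
by rewrite Um0l !addr0 eqxx spanbD.
Qed.
Canonical Kgroup := Group Kset_group.

Lemma HK h : h \in H -> (F h).1 = 0%R /\ spanb (F h).2.
Proof.
have : H \subset F @*^-1 Kgroup.
  rewrite gen_subG; apply/subsetP => x /Hgens_gen[j jn ->].
  have Fg := F_gen jn.
  have Gg : gen j \in Gt by apply: (subsetP HsubG); apply: gen_H.
  by apply: mem_morphpre => //; rewrite Fg inE /= eqxx spanb_Nj.
move/subsetP => sub Hh; have := sub h Hh; rewrite morphpreE inE /= => /andP[_].
by rewrite !inE => /andP[/eqP -> ->].
Qed.

Definition s (x : coset_of H) : gT := odflt 1 [pick a in Gt | coset H a == x].

Lemma sP x : x \in Gt / H -> s x \in Gt /\ coset H (s x) = x.
Proof.
rewrite /s; case: pickP => [a /andP[Ga /eqP <-] //| none].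
case/morphimP => a Na Ga e; have := none a; rewrite Ga e /= eqxx //.
Qed.

Lemma cosetM' a b : a \in Gt -> b \in Gt -> coset H (a * b) = coset H a * coset H b.
Proof. by move=> Ga Gb; rewrite morphM // (subsetP nHG). Qed.

Lemma same_coset a b : a \in Gt -> b \in Gt -> coset H a = coset H b -> a * b^-1 \in H.
Proof.
move=> Ga Gb e; apply: coset_idr; first by rewrite (subsetP nHG) // groupM ?groupV.
by rewrite cosetM' ?groupV // morphV ?(subsetP nHG) // e mulgV.
Qed.

Lemma F_same a b : a \in Gt -> b \in Gt -> coset H a = coset H b ->
  (F a).1 = (F b).1 /\ (F a).2 = ((F (a * b^-1)%g).2 + (F b).2)%R.
Proof.
move=> Ga Gb e; have Hc := same_coset Ga Gb e.
have Gc : a * b^-1 \in Gt by rewrite groupM ?groupV.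
have ea : F a = F (a * b^-1) * F b by rewrite -morphM ?mulgKV.
by rewrite ea hmulE /= (HK Hc).1 Um0l addr0 add0r.
Qed.

Definition P x := F (s x).
Definition V x := (P x).1.
Definition M x := (P x).2.

Lemma Vadd x y : x \in Gt / H -> y \in Gt / H -> V (x * y) = (V x + V y)%R.
Proof.
move=> Gx Gy; have [Gsx ex] := sP Gx; have [Gsy ey] := sP Gy.
have [Gsxy exy] := sP (groupM Gx Gy).
have := F_same (groupM Gsx Gsy) Gsxy; rewrite cosetM' // ex ey exy => /(_ erefl) [e _].
by rewrite /V /P -e morphM.
Qed.

Definition k0 : 'I_m := inord 0.
Definition li (i : 'I_n) : 'I_m := inord (i + 1).

Lemma k0_li i : (k0 < li i)%N.
Proof. by rewrite /k0 /li !inordK //; have := ltn_ord i; lia. Qed.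

Definition cocE (i : 'I_n) (x y : coset_of H) : 'F_p := ((M x + M y - M (x * y) + Um (V x) (V y)) k0 (li i))%R.
Definition fco i x y : rat := lift (cocE i x y).

Lemma cocE_val i x y : cocE i x y =
  (M x k0 (li i) + M y k0 (li i) - M (x * y) k0 (li i) + V x 0 k0 * V y 0 (li i))%R.
Proof. by rewrite /cocE !mxE k0_li. Qed.

Lemma fco_cocycle i x y z : x \in Gt / H -> y \in Gt / H -> z \in Gt / H ->
  qz_zero (fco i y z - fco i (x * y) z + fco i x (y * z) - fco i x y).
Proof.
move=> Gx Gy Gz; apply: (lift_comb pr_p).
rewrite !cocE_val !Vadd ?groupM // !mxE mulgA.
by ring.
Qed.

Lemma lift_comb4 (X Y Z W : 'F_p) :
  qz_zero (lift (X + Y - Z + W)%R - lift X - lift Y + lift Z - lift W)%R.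
Proof.
have h1 := lift_add pr_p (X + Y - Z)%R W.
have h2 := lift_add pr_p X Y.
have h3 : qz_zero (lift (X + Y - Z)%R - lift (X + Y)%R + lift Z - lift (0 : 'F_p))%R.
  by apply: (lift_comb pr_p); ring.
rewrite lift0 subr0 in h3.
have -> : (lift (X + Y - Z + W)%R - lift X - lift Y + lift Z - lift W =
   (lift (X + Y - Z + W)%R - lift (X + Y - Z)%R - lift W) +
   (lift (X + Y - Z)%R - lift (X + Y)%R + lift Z) + (lift (X + Y)%R - lift X - lift Y))%R.
  by ring.
by apply: qzD; [apply: qzD|].
Qed.

Lemma coset_pcomm a b : a \in Gt -> b \in Gt ->
  coset H (pcomm a b) = pcomm (coset H a) (coset H b).
Proof.
move=> Ga Gb; have Na := subsetP nHG _ Ga; have Nb := subsetP nHG _ Gb.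
by rewrite /pcomm !morphM ?groupM ?groupV // !morphV.
Qed.

Lemma par_lemma i x y : x \in Gt / H -> y \in Gt / H -> x * y = y * x ->
  (V x 0 k0 * V y 0 (li i) - V y 0 k0 * V x 0 (li i) = 0)%R.
Proof.
move=> Gx Gy cxy; have [Gsx ex] := sP Gx; have [Gsy ey] := sP Gy.
have Hc : pcomm (s x) (s y) \in H.
  apply: coset_idr; first by rewrite (subsetP nHG) // pcomm_in.
  by rewrite coset_pcomm // ex ey /pcomm cxy mulgK mulgV.
have [_ sp] := HK Hc; rewrite F_pcomm // in sp.
have := rank_lemma sp (ltn_ord i).
by rewrite Eentry -/k0 -/(li i) ?k0_li.
Qed.

Local Open Scope ring_scope.
Lemma ab_cobound i (A : {group coset_of H}) : A \subset (Gt / H)%g -> abelian A ->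
  coboundary2 A (fco i).
Proof.
move=> sAG abA.
have GA x : x \in A -> x \in (Gt / H)%g by move=> Ax; apply: (subsetP sAG).
set l := li i.
have par x y : x \in A -> y \in A -> (V x 0 k0 * V y 0 l = V y 0 k0 * V x 0 l)%R.
  move=> Ax Ay; apply/eqP; rewrite -subr_eq0; apply/eqP; apply: par_lemma; rewrite ?GA //.
  exact: (centsP abA).
have [r hr] : exists r : 'F_p, forall x y, x \in A -> y \in A ->
    (V x 0 k0 * V y 0 l = r * V x 0 k0 * V y 0 k0)%R.
  case: (pickP [pred x in A | V x 0%R k0 != 0%R]) => [x0 /andP[Ax0 nz] | none].
    exists (V x0 0 l / V x0 0 k0)%R => x y Ax Ay.
    have e := par y x0 Ay Ax0.
    have e2 : (V y 0 l = V y 0 k0 * V x0 0 l / V x0 0 k0)%R.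
      by rewrite e mulrC mulrA mulVf // mul1r.
    by rewrite e2; field.
  exists 0%R => x y Ax Ay; have := none x; rewrite /= Ax /= => /negbFE/eqP ->.
  by rewrite !mul0r.
exists (fun x => (lift (M x k0 l) - (nat_of_ord r)%:R * Qn p (nat_of_ord (V x 0%R k0)))%R).
move=> x y Ax Ay.
have Vxy : (V (x * y)%g 0 k0 = V x 0 k0 + V y 0 k0)%R by rewrite Vadd ?GA // mxE.
rewrite /fco cocE_val hr // Vxy.
set a := V x 0%R k0; set b := V y 0%R k0.
have T1 := lift_comb4 (M x k0 l) (M y k0 l) (M (x * y)%g k0 l) (r * a * b)%R.
have T2 := lift_mul3 pr_p r a b.
have T3 := Qn_add pr_p a b.
rewrite !natrM in T2.
set R := (nat_of_ord r)%:R.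
match goal with |- is_true (qz_zero ?E) =>
  have -> : E = ((lift (M x k0 l + M y k0 l - M (x * y)%g k0 l + r * a * b)%R - lift (M x k0 l)
   - lift (M y k0 l) + lift (M (x * y)%g k0 l) - lift (r * a * b)%R) +
   (lift (r * a * b)%R - R * (nat_of_ord a)%:R * (nat_of_ord b)%:R / p%:R) -
   R * (Qn p (nat_of_ord (a + b)%R) - Qn p (nat_of_ord a) - Qn p (nat_of_ord b) -
      ((nat_of_ord a * nat_of_ord b)%N)%:R / p%:R))%R end.
  by rewrite natrM; ring.
by apply: qzB; [apply: qzD | apply: qzMn].
Qed.

Lemma pf_cobound i : coboundary2 (Gt / H)%g (fun x y => p%:R * fco i x y).
Proof.
exists (fun _ => 0) => x y _ _.
have -> : p%:R * fco i x y - (0 + 0 - 0) = (nat_of_ord (cocE i x y))%:R.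
  by rewrite /fco /lift; field; rewrite p_neq0.
exact: qznat.
Qed.

Section Indep.
Variable c : 'I_n -> nat.
Variable g : coset_of H -> rat.
Hypothesis hg : forall x y, x \in (Gt / H)%g -> y \in (Gt / H)%g ->
  qz_zero ((\sum_(i < n) (c i)%:R * fco i x y) - (g x + g y - g (x * y)%g)).

Definition theta (a : gT) : rat :=
  \sum_(i < n) (c i)%:R * lift ((F a).2 k0 (li i) - M (coset H a) k0 (li i)) + g (coset H a).

Lemma qz_sum (I : finType) (f : I -> rat) : (forall i, qz_zero (f i)) -> qz_zero (\sum_i f i).
Proof. by move=> h; rewrite /qz_zero; apply: rpred_sum => i _; apply: h. Qed.

Lemma theta_hom a b : a \in Gt -> b \in Gt -> qz_zero (theta (a * b)%g - theta a - theta b).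
Proof.
move=> Ga Gb.
have Ga' := mem_quotient H Ga; have Gb' := mem_quotient H Gb.
set x := coset H a; set y := coset H b.
have exy : coset H (a * b)%g = (x * y)%g by rewrite cosetM'.
have Va : (F a).1 = V x.
  by have [Gs es] := sP Ga'; have [-> _] := F_same Ga Gs (esym es).
have Vb : (F b).1 = V y.
  by have [Gs es] := sP Gb'; have [-> _] := F_same Gb Gs (esym es).
have key i : ((F (a * b)%g).2 k0 (li i) - M (x * y)%g k0 (li i) =
    ((F a).2 k0 (li i) - M x k0 (li i)) + ((F b).2 k0 (li i) - M y k0 (li i)) + cocE i x y).
  rewrite cocE_val morphM // hmulE /= Va Vb !mxE k0_li; ring.
have := hg Ga' Gb'.
rewrite /theta exy.
set S1 := \sum_(i < n) _; set S2 := \sum_(i < n) _; set S3 := \sum_(i < n) _; set S4 := \sum_(i < n) _.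
move=> h0.
have -> : S2 + g (x * y)%g - (S3 + g x) - (S4 + g y) =
   \sum_(i < n) (c i)%:R * (lift ((F (a * b)%g).2 k0 (li i) - M (x * y)%g k0 (li i))
     - lift ((F a).2 k0 (li i) - M x k0 (li i)) - lift ((F b).2 k0 (li i) - M y k0 (li i))
     - fco i x y) + (S1 - (g x + g y - g (x * y)%g)).
  have eB : \sum_(i < n) (c i)%:R * (lift ((F (a * b)%g).2 k0 (li i) - M (x * y)%g k0 (li i))
     - lift ((F a).2 k0 (li i) - M x k0 (li i)) - lift ((F b).2 k0 (li i) - M y k0 (li i))
     - fco i x y) = S2 - S3 - S4 - S1.
    by rewrite /S1 /S2 /S3 /S4 -!sumrB; apply: eq_bigr => i _; ring.
  by rewrite eB; ring.
apply: qzD => //; apply: qz_sum => i; apply: qzMn.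
rewrite key /fco.
set X := (_ - M x k0 (li i)); set Y := (_ - M y k0 (li i)); set C := cocE i x y.
have h1 := lift_add pr_p (X + Y) C; have h2 := lift_add pr_p X Y.
have -> : lift (X + Y + C) - lift X - lift Y - lift C =
  (lift (X + Y + C) - lift (X + Y) - lift C) + (lift (X + Y) - lift X - lift Y) by ring.
exact: qzD.
Qed.

Lemma theta1 : qz_zero (theta 1).
Proof.
have := theta_hom (group1 Gt) (group1 Gt); rewrite mulg1 => h.
have -> : theta 1 = - (theta 1 - theta 1 - theta 1) by ring.
exact: qzN.
Qed.

Lemma thetaV a : a \in Gt -> qz_zero (theta a^-1 + theta a).
Proof.
move=> Ga; have := theta_hom (groupVr Ga) Ga; rewrite mulVg => h.
have -> : theta a^-1 + theta a = theta 1 - (theta 1 - theta a^-1 - theta a) by ring.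
by apply: qzB => //; apply: theta1.
Qed.

Lemma theta_pcomm a b : a \in Gt -> b \in Gt -> qz_zero (theta (pcomm a b)).
Proof.
move=> Ga Gb; rewrite /pcomm.
have h1 := theta_hom (groupM (groupM Ga Gb) (groupVr Ga)) (groupVr Gb).
have h2 := theta_hom (groupM Ga Gb) (groupVr Ga).
have h3 := theta_hom Ga Gb.
have h4 := thetaV Ga; have h5 := thetaV Gb.
have -> : theta (a * b * a^-1 * b^-1)%g =
  (theta (a * b * a^-1 * b^-1)%g - theta (a * b * a^-1)%g - theta b^-1) +
  (theta (a * b * a^-1)%g - theta (a * b)%g - theta a^-1) +
  (theta (a * b)%g - theta a - theta b) + (theta a^-1 + theta a) + (theta b^-1 + theta b) by ring.
by apply: qzD => //; apply: qzD => //; apply: qzD => //; apply: qzD.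
Qed.

Lemma theta_H h : h \in H ->
  qz_zero (theta h - theta 1 - \sum_(i < n) (c i)%:R * lift ((F h).2 k0 (li i))).
Proof.
move=> Hh; rewrite /theta coset_id // (morph1 F) honeE /= morph1.
set Sa := \sum_(i < n) _; set Sb := \sum_(i < n) _; set Sc := \sum_(i < n) _.
have -> : Sa + g 1 - (Sb + g 1) - Sc = Sa - Sb - Sc by ring.
rewrite /Sa /Sb /Sc -!sumrB; apply: qz_sum => i.
rewrite -!mulrBr; apply: qzMn; rewrite mxE.
set X := (F h).2 k0 (li i); set Y := M 1%g k0 (li i).
have := lift_add pr_p X (- Y); rewrite sub0r => h0.
have -> : lift (X - Y) - lift (- Y) - lift X = lift (X - Y) - lift X - lift (- Y) by ring.
exact: h0.
Qed.
Lemma indep_dvd j : (p %| c j)%N.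
Proof.
have hH := theta_H (gen_H (ltn_ord j)).
have [a [b [cc [d [[Ga Gb Gc Gd e] _]]]]] := gen_pcomm (ltn_ord j).
have hg1 : qz_zero (theta (gen j)).
  rewrite e; have := theta_hom (pcomm_in Ga Gb) (pcomm_in Gc Gd).
  have := theta_pcomm Ga Gb; have := theta_pcomm Gc Gd => q1 q2 q3.
  have -> : theta (pcomm a b * pcomm cc d)%g = (theta (pcomm a b * pcomm cc d)%g
     - theta (pcomm a b) - theta (pcomm cc d)) + theta (pcomm a b) + theta (pcomm cc d) by ring.
  by apply: qzD; [apply: qzD|].
have hs : qz_zero (\sum_(i < n) (c i)%:R * lift ((F (gen j)).2 k0 (li i))).
  have -> : \sum_(i < n) (c i)%:R * lift ((F (gen j)).2 k0 (li i)) =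
     theta (gen j) - theta 1 - (theta (gen j) - theta 1 - \sum_(i < n) (c i)%:R * lift ((F (gen j)).2 k0 (li i))) by ring.
  by apply: qzB => //; apply: qzB => //; apply: theta1.
have F2 : (F (gen j)).2 = Nj p n j by rewrite F_gen.
rewrite F2 in hs.
have ent i : Nj p n j k0 (li i) = (i == j)%:R.
  rewrite Nj_entry ?k0_li // /k0 /li !inordK; try (have := ltn_ord i; have := ltn_ord j; lia).
  have -> : (0 == j + 2)%N = false by rewrite addn2.
  by rewrite eqxx eqn_add2r /= addr0.
rewrite (bigD1 j) //= big1 ?addr0 in hs; last first.
  by move=> i ij; rewrite ent (negbTE ij) lift0 mulr0.
rewrite ent eqxx lift1 // mulrA mulr1 in hs.
exact: qz_div_dvd hs.
Qed.
End Indep.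

Lemma main_F : B0_contains_Zp_pow (Gt / H)%G p n.
Proof.
exists fco; split.
- move=> i; split; first by move=> x y z; apply: fco_cocycle.
  move=> A sAG bA; apply: ab_cobound => //.
  case: bA => [/cyclic_abelian // | [B [C [cB cC dBC]]]].
  have [_ eBC cBC _] := dprodP dBC.
  by rewrite -eBC abelianM !cyclic_abelian.
- exact: pf_cobound.
- by move=> c [g hg] j; apply: (@indep_dvd c g).
Qed.
End Main.

Section Final.
Local Open Scope group_scope.

Lemma heis_comm1 p m (x y : heis p m) : ([~ x, y]).1 = 0%R.
Proof.
rewrite /commg /conjg !hmul1E !hinv1E.
by apply/rowP => k; rewrite !mxE; ring.
Qed.

Theorem theorem5p2_proof (p n : nat) (gT : finGroupType) (Gt : {group gT}) (sigma : nat -> gT) :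
  prime p -> (0 < n)%N ->
  Gt :=: <<gens_set (n + 3) sigma>> ->
  'Z(Gt) = [~: Gt, Gt] ->
  (forall i, (0 < i <= n + 3)%N -> sigma i ^+ p = 1) ->
  (forall i j, (0 < i)%N -> (i < j <= n + 3)%N -> pcomm (sigma i) (sigma j) ^+ p = 1) ->
  (forall (hT : finGroupType) (tau : nat -> hT),
     (forall i, (0 < i <= n + 3)%N -> tau i ^+ p = 1) ->
     (forall i j, (0 < i)%N -> (i < j <= n + 3)%N -> pcomm (tau i) (tau j) ^+ p = 1) ->
     [~: <<gens_set (n + 3) tau>>, <<gens_set (n + 3) tau>>]
        \subset 'Z(<<gens_set (n + 3) tau>>) ->
     exists f : {morphism Gt >-> hT},
       forall i, (0 < i <= n + 3)%N -> f (sigma i) = tau i) ->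
  B0_contains_Zp_pow (Gt / Hsub n sigma)%G p n.
Proof.
move=> pr_p n0 Ggen ZG _ _ univ.
pose tau (i : nat) : heis p n.+3 := (ev p n i.-1, 0%R).
have pz (k : nat) (X : 'M['F_p]_(k, n.+3)) : (X *+ p)%R = 0%R.
  by rewrite -scaler_nat (pchar_Fp_0 pr_p) scale0r.
have [f hf] : exists f : {morphism Gt >-> heis p n.+3},
    forall i, (0 < i <= n + 3)%N -> f (sigma i) = tau i.
  apply: univ.
  - by move=> i _; rewrite /tau hexpv ?Um_ev0 // pz.
  - by move=> i j _ _; rewrite /tau /pcomm hpcomm hexp0 pz.
  - rewrite gen_subG; apply/subsetP => _ /imset2P[x y Ax Ay ->].
    apply/centerP; split; first by rewrite groupR.
    by move=> z _; apply: hcentral; apply: heis_comm1.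
apply: (main_F pr_p n0 Ggen ZG (F := f)) => j jn.
by rewrite hf //; lia.
Qed.
End Final.

Local Open Scope group_scope.

Theorem theorem5p2 (p n : nat) (gT : finGroupType) (Gt : {group gT}) (sigma : nat -> gT) :
  prime p -> (0 < n)%N ->
  (* Gt is generated by sigma_1, ..., sigma_{n+3} *)
  Gt :=: <<gens_set (n + 3) sigma>> ->
  'Z(Gt) = [~: Gt, Gt] ->
  (forall i, (0 < i <= n + 3)%N -> sigma i ^+ p = 1) ->
  (forall i j, (0 < i)%N -> (i < j <= n + 3)%N -> pcomm (sigma i) (sigma j) ^+ p = 1) ->
  (* Gt is the group defined by this presentation: universal property *)
  (forall (hT : finGroupType) (tau : nat -> hT),
     (forall i, (0 < i <= n + 3)%N -> tau i ^+ p = 1) ->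
     (forall i j, (0 < i)%N -> (i < j <= n + 3)%N -> pcomm (tau i) (tau j) ^+ p = 1) ->
     [~: <<gens_set (n + 3) tau>>, <<gens_set (n + 3) tau>>]
        \subset 'Z(<<gens_set (n + 3) tau>>) ->
     exists f : {morphism Gt >-> hT},
       forall i, (0 < i <= n + 3)%N -> f (sigma i) = tau i) ->
  B0_contains_Zp_pow (Gt / Hsub n sigma)%G p n.
Proof. exact: theorem5p2_proof. Qed.
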